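(* For a nonzero ideal $E$ of $C(X)_\mathcal{P}$ the following are equivalent: (1) $E$ intersects every nonzero $z$-ideal of $C(X)_\mathcal{P}$ nontrivially; (2) $E$ is an essential ideal of $C(X)_\mathcal{P}$; (3) $int_{X_\mathcal{P}}\bigcap Z_\mathcal{P}[E]=\emptyset$, i.e. $\bigcap\{Z_\mathcal{P}(f): f\in E\}$ is nowhere dense in $X_\mathcal{P}$.
   Context: Let $(X,\tau)$ be a $T_1$ topological space and $\mathcal{P}$ an ideal of closed subsets of $X$ (a nonempty family of closed sets closed under finite unions and under taking closed subsets). For $f\colon X\to\mathbb{R}$, $D_f$ denotes the set of points of discontinuity of $f$, and $C(X)_\mathcal{P}=\{f\colon X\to\mathbb{R} : \overline{D_f}\in\mathcal{P}\}$, a commutative ring with unity under pointwise operations. For $f\in C(X)_\mathcal{P}$, $Z_\mathcal{P}(f)=\{x: f(x)=0\}$, $coz(f)=X\setminus Z_\mathcal{P}(f)$, and for an ideal $I$, $Z_\mathcal{P}[I]=\{Z_\mathcal{P}(f): f\in I\}$. $X_\mathcal{P}$ is $X$ with the topology having base $\{coz(f): f\in C(X)_\mathcal{P}\}$, $int_{X_\mathcal{P}}$ its interior operator. An ideal is essential if it intersects every nonzero ideal nontrivially. In a commutative ring, $M(a)$ is the intersection of all maximal ideals containing $a$, and an ideal $I$ is a $z$-ideal if $a\in I\Rightarrow M(a)\subseteq I$. *)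

(* Defs.v *)
From HB Require Import structures.
From mathcomp Require Import all_boot all_order all_algebra.
From mathcomp Require Import all_classical all_reals topology normedtype.
Set Implicit Arguments. Unset Strict Implicit. Unset Printing Implicit Defensive.
Import Order.TTheory GRing.Theory Num.Theory.
Import numFieldNormedType.Exports.
Local Open Scope classical_set_scope.
Local Open Scope ring_scope.

Section CXP.
Variables (X : topologicalType) (R : realType).

Definition closed_ideal (P : set (set X)) : Prop :=
  [/\ P !=set0,
      (forall A, P A -> closed A),
      (forall A B, P A -> P B -> P (A `|` B)) &
      (forall A B, P A -> closed B -> B `<=` A -> P B)].

Definition discont (f : X -> R) : set X := [set x | ~ {for x, continuous f}].

Definition CP (P : set (set X)) : set (X -> R) :=
  [set f | P (closure (discont f))].

Definition ZP (f : X -> R) : set X := [set x | f x = 0].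
Definition coz (f : X -> R) : set X := [set x | f x != 0].

Definition is_ideal (P : set (set X)) (I : set (X -> R)) : Prop :=
  [/\ I `<=` CP P,
      I (fun _ => 0),
      (forall f g, I f -> I g -> I (fun x => f x + g x)),
      (forall f, I f -> I (fun x => - f x)) &
      (forall f g, CP P g -> I f -> I (fun x => g x * f x))].

Definition zero_fun : X -> R := fun _ => 0.
Definition one_fun : X -> R := fun _ => 1.

Definition nonzero_ideal (I : set (X -> R)) : Prop :=
  exists2 f, I f & f <> zero_fun.

Definition is_maximal_ideal (P : set (set X)) (M : set (X -> R)) : Prop :=
  [/\ is_ideal P M, ~ M one_fun &
      (forall J, is_ideal P J -> ~ J one_fun -> M `<=` J -> J = M)].

Definition Mof (P : set (set X)) (a : X -> R) : set (X -> R) :=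
  [set g | CP P g /\ forall M, is_maximal_ideal P M -> M a -> M g].

Definition is_z_ideal (P : set (set X)) (I : set (X -> R)) : Prop :=
  is_ideal P I /\ forall a, I a -> Mof P a `<=` I.

Definition essential_ideal (P : set (set X)) (E : set (X -> R)) : Prop :=
  is_ideal P E /\
  forall J, is_ideal P J -> nonzero_ideal J ->
    exists2 f, (E `&` J) f & f <> zero_fun.

(* interior in X_P, whose topology has base {coz f : f in C(X)_P} *)
Definition int_XP (P : set (set X)) (A : set X) : set X :=
  [set x | exists2 f, CP P f & coz f x /\ coz f `<=` A].

Definition bigcapZ (E : set (X -> R)) : set X :=
  [set x | forall f, E f -> ZP f x].

End CXP.
Arguments int_XP {X} R P A.
Arguments zero_fun {X R}.
Arguments one_fun {X R}.
Arguments CP {X} R P f.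

(* Main.v *)
Require Import Defs.
From HB Require Import structures.
From mathcomp Require Import all_boot all_order all_algebra.
From mathcomp Require Import all_classical all_reals topology normedtype.
Local Open Scope classical_set_scope.
Local Open Scope ring_scope.
Import Order.TTheory GRing.Theory Num.Theory.
Import numFieldNormedType.Exports.

Section Aux.
Variables (X : topologicalType) (R : realType) (P : set (set X)).
Hypothesis hP : closed_ideal P.

Lemma CP_lift (f g h : X -> R) :
  (forall x, {for x, continuous f} -> {for x, continuous g} ->
     {for x, continuous h}) ->
  CP R P f -> CP R P g -> CP R P h.
Proof.
case: hP => _ _ PU PS Hc; rewrite /CP /= => Cf Cg.
set A := closure (discont f) `|` closure (discont g).
have clA : closed A by apply: closedU; apply: closed_closure.
apply: (PS A); [exact: PU|exact: closed_closure|].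
rewrite [X in _ `<=` X](closure_id A).1 //; apply: closureS.
move=> x /= nch; rewrite /A /=.
have [cf|ncf] := pselect {for x, continuous f}; last first.
  by left; apply: subset_closure.
have [cg|ncg] := pselect {for x, continuous g}; last first.
  by right; apply: subset_closure.
by exfalso; apply: nch; apply: Hc.
Qed.

Lemma CP_cst (c : R) : CP R P (fun _ => c).
Proof.
case: hP => -[A PA] cl _ PS; rewrite /CP /=.
have -> : discont (fun _ : X => c) = set0.
  rewrite -subset0 => x /=; apply; exact: cvg_cst.
rewrite closure0; apply: (PS A) => //; exact: closed0.
Qed.

Lemma CP_add (f g : X -> R) : CP R P f -> CP R P g -> CP R P (fun x => f x + g x).
Proof. by apply: CP_lift => x cf cg; apply: cvgD. Qed.

Lemma CP_mul (f g : X -> R) : CP R P f -> CP R P g -> CP R P (fun x => f x * g x).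
Proof. by apply: CP_lift => x cf cg; apply: cvgM. Qed.

Lemma CP_opp (f : X -> R) : CP R P f -> CP R P (fun x => - f x).
Proof. move=> Cf; apply: (@CP_lift f f _ _ Cf Cf) => x cf _; exact: cvgN. Qed.

Definition My (y : X) : set (X -> R) := [set h | CP R P h /\ h y = 0].

Lemma My_max y : is_maximal_ideal P (My y).
Proof.
have Iy : is_ideal P (My y).
  split.
  - by move=> h [].
  - by split => //; apply: CP_cst.
  - by move=> f g [Cf f0] [Cg g0]; split; [apply: CP_add|rewrite f0 g0 addr0].
  - by move=> f [Cf f0]; split; [apply: CP_opp|rewrite f0 oppr0].
  - by move=> f g Cg [Cf f0]; split; [apply: CP_mul|rewrite f0 mulr0].
split => //.
  by move=> [_] /eqP; rewrite oner_eq0.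
move=> J [JC J0 JD JN JM] J1 sub.
apply/seteqP; split => // h Jh; split; first exact: JC.
apply/eqP/negPn/negP => hy.
have Mh : My y (fun x => h x - h y).
  split; first by apply: CP_add; [exact: JC|exact: CP_cst].
  by rewrite subrr.
have := JN _ (sub _ Mh) => Jn.
have := JD _ _ Jh Jn.
have -> : (fun x => h x + - (h x - h y)) = (fun _ => h y).
  by apply: funext => x; rewrite opprB addrC subrK.
move=> Jc; apply: J1.
have := JM _ _ (CP_cst (h y)^-1) Jc.
have -> // : (fun _ : X => (h y)^-1 * h y) = Defs.one_fun.
by apply: funext => x; rewrite mulVf.
Qed.

End Aux.

Theorem theorem2p16 (X : topologicalType) (R : realType)
  (P : set (set X)) (E : set (X -> R)) :
  accessible_space X -> closed_ideal P ->
  is_ideal P E -> nonzero_ideal E ->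
  [/\ ((forall J, is_z_ideal P J -> nonzero_ideal J ->
          exists2 f, (E `&` J) f & f <> zero_fun) <->
       essential_ideal P E),
      (essential_ideal P E <-> int_XP R P (bigcapZ E) = set0) &
      ((forall J, is_z_ideal P J -> nonzero_ideal J ->
          exists2 f, (E `&` J) f & f <> zero_fun) <->
       int_XP R P (bigcapZ E) = set0)].
Proof.
move=> _ hP IE nzE.
have IEc := IE; case: IEc => EC E0 ED EN EM.
have h32 : int_XP R P (bigcapZ E) = set0 -> essential_ideal P E.
  move=> hint; split => // J [JC J0 JD JN JM] [g Jg gn0].
  have [x gx] : exists x, g x != 0.
    apply: contrapT => nx; apply: gn0; apply: funext => x.
    by apply/eqP/negPn/negP => gx; apply: nx; exists x.
  have [z [e [Ee ez gz]]] : exists z e, [/\ E e, e z != 0 & g z != 0].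
    apply: contrapT => ne.
    have : int_XP R P (bigcapZ E) x.
      exists g; first exact: JC.
      split => // z gz f Ef; rewrite /ZP /=.
      apply/eqP/negPn/negP => fz; apply: ne; by exists z, f.
    by rewrite hint.
  exists (fun x => g x * e x).
    split; first exact: EM (JC _ Jg) Ee.
    have -> : (fun x => g x * e x) = (fun x => e x * g x).
      by apply: funext => y; rewrite mulrC.
    exact: JM (EC _ Ee) Jg.
  move=> /(congr1 (fun h => h z)) /eqP; rewrite /zero_fun mulf_eq0.
  by rewrite (negbTE ez) (negbTE gz).
have h21 : essential_ideal P E -> forall J, is_z_ideal P J -> nonzero_ideal J ->
          exists2 f, (E `&` J) f & f <> zero_fun.
  by move=> [_ H] J [IJ _]; apply: H.
have h13 : (forall J, is_z_ideal P J -> nonzero_ideal J ->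
          exists2 f, (E `&` J) f & f <> zero_fun) -> int_XP R P (bigcapZ E) = set0.
  move=> H; rewrite -subset0 => x0 [f Cf [fx0 sub]].
  pose J := [set g | CP R P g /\ coz g `<=` coz f].
  have IJ : is_ideal P J.
    split.
    - by move=> g [].
    - by split; [apply: CP_cst|move=> y; rewrite /coz /= eqxx].
    - move=> g h [Cg sg] [Ch sh]; split; first exact: CP_add.
      move=> y; rewrite /coz /= => gh; have [gy|gy] := eqVneq (g y) 0.
        by apply: sh; rewrite /coz /=; move: gh; rewrite gy add0r.
      exact: sg.
    - move=> g [Cg sg]; split; first exact: CP_opp.
      by move=> y; rewrite /coz /= oppr_eq0; apply: sg.
    - move=> g h Cg [Ch sh]; split; first exact: CP_mul.
      by move=> y; rewrite /coz /= mulf_eq0 negb_or => /andP[_]; apply: sh.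
  have zJ : is_z_ideal P J.
    split => // a [Ca sa] g [Cg Mg]; split => // y gy; apply: sa.
    rewrite /coz /=; apply/negP => /eqP ay.
    have [_ gy0] := Mg _ (@My_max X R P hP y) (conj Ca ay).
    by move: gy; rewrite /coz /= gy0 eqxx.
  have nzJ : nonzero_ideal J.
    exists f; first by split.
    by move=> /(congr1 (fun h => h x0)); rewrite /zero_fun => /eqP; apply/negP.
  have [g [Eg [Cg sg]] gn0] := H J zJ nzJ.
  apply: gn0; apply: funext => y; rewrite /zero_fun.
  apply/eqP/negPn/negP => gy.
  by have /eqP := sub y (sg y gy) g Eg; apply/negP.
split; split => //; auto.
Qed.
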